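(* The classes of coherent weakly Hausdorff spaces and of compact coherent weakly Hausdorff spaces are not $\omega$-projective. Moreover, there is an ep-system $(p_{mn}\colon X_n\to X_m)_{m\le n\in\mathbb N}$ of compact coherent weakly Hausdorff spaces whose projective limit in the category of topological spaces is not weakly Hausdorff.
   Context: A projective system of topological spaces consists of a directed preordered set $(I,\sqsubseteq)$, spaces $X_i$ and continuous maps $p_{ij}\colon X_j\to X_i$ for $i\sqsubseteq j$ with $p_{ii}=\mathrm{id}$ and $p_{ij}\circ p_{jk}=p_{ik}$; its projective limit is its limit in the category of topological spaces. A class is $\omega$-projective if it is closed under projective limits of systems whose index set has a countable cofinal subset. The specialization preorder is $x\le y$ iff every open neighbourhood of $x$ contains $y$; $\uparrow x$ is the set of points above $x$; saturated means upward closed. A space is coherent if the intersection of any two compact saturated subsets is compact (no separation axiom in compactness). A space is weakly Hausdorff if for any two points $x,y$ and every open neighbourhood $W$ of $\uparrow x\cap\uparrow y$ there are open neighbourhoods $U$ of $x$ and $V$ of $y$ with $U\cap V\subseteq W$. A continuous map $p\colon Y\to X$ is a projection if there is a continuous $e\colon X\to Y$ with $p\circ e=\mathrm{id}_X$ and $e\circ p\le\mathrm{id}_Y$ pointwise in the specialization preorder of $Y$; an ep-system is a projective system whose bonding maps are projections. *)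

(* Defs.v *)
From HB Require Import structures.
From mathcomp Require Import all_boot all_order.
From mathcomp Require Import all_classical.
From mathcomp Require Import topology.
Set Implicit Arguments. Unset Strict Implicit. Unset Printing Implicit Defensive.
Local Open Scope classical_set_scope.

Definition spec_le (T : topologicalType) (x y : T) : Prop :=
  forall U : set T, open U -> U x -> U y.

Definition upset (T : topologicalType) (x : T) : set T := [set y | spec_le x y].

Definition saturated (T : topologicalType) (A : set T) : Prop :=
  forall x y, A x -> spec_le x y -> A y.

Definition coherent (T : topologicalType) : Prop :=
  forall A B : set T, compact A -> saturated A -> compact B -> saturated B ->
    compact (A `&` B).

Definition weakly_hausdorff (T : topologicalType) : Prop :=
  forall (x y : T) (W : set T), open W -> upset x `&` upset y `<=` W ->
    exists U V : set T, [/\ open U, U x, open V, V y & U `&` V `<=` W].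

Definition compact_space (T : topologicalType) : Prop := compact [set: T].

Definition directed_preorder (I : Type) (le : I -> I -> Prop) : Prop :=
  [/\ (forall i, le i i),
      (forall i j k, le i j -> le j k -> le i k),
      (exists i : I, True) &
      (forall i j, exists k, le i k /\ le j k)].

(* Projective system: bonding maps p i j : X j -> X i, constrained for i <= j *)
Definition is_proj_system (I : Type) (le : I -> I -> Prop)
    (X : I -> topologicalType) (p : forall i j, X j -> X i) : Prop :=
  [/\ directed_preorder le,
      (forall i j, le i j -> continuous (p i j)),
      (forall i (x : X i), p i i x = x) &
      (forall i j k, le i j -> le j k -> forall x : X k,
          p i j (p j k x) = p i k x)].

Definition is_cone (I : Type) (le : I -> I -> Prop)
    (X : I -> topologicalType) (p : forall i j, X j -> X i)
    (L : topologicalType) (q : forall i, L -> X i) : Prop :=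
  (forall i, continuous (q i)) /\
  (forall i j, le i j -> forall x : L, p i j (q j x) = q i x).

Definition is_proj_limit (I : Type) (le : I -> I -> Prop)
    (X : I -> topologicalType) (p : forall i j, X j -> X i)
    (L : topologicalType) (q : forall i, L -> X i) : Prop :=
  is_cone le p q /\
  forall (M : topologicalType) (r : forall i, M -> X i), is_cone le p r ->
    exists u : M -> L,
      [/\ continuous u, (forall i (x : M), q i (u x) = r i x) &
          (forall u' : M -> L, continuous u' ->
             (forall i (x : M), q i (u' x) = r i x) -> forall x, u' x = u x)].

Definition countable_cofinal (I : Type) (le : I -> I -> Prop) : Prop :=
  exists C : set I, countable C /\ forall i, exists j, C j /\ le i j.

Definition omega_projective (P : topologicalType -> Prop) : Prop :=
  forall (I : Type) (le : I -> I -> Prop) (X : I -> topologicalType)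
         (p : forall i j, X j -> X i),
    is_proj_system le p -> countable_cofinal le -> (forall i, P (X i)) ->
    forall (L : topologicalType) (q : forall i, L -> X i),
      is_proj_limit le p q -> P L.

Definition is_projection (Y X : topologicalType) (p : Y -> X) : Prop :=
  continuous p /\
  exists e : X -> Y, [/\ continuous e, (forall x, p (e x) = x) &
                         (forall y, spec_le (e (p y)) y)].

Definition is_ep_system (I : Type) (le : I -> I -> Prop)
    (X : I -> topologicalType) (p : forall i j, X j -> X i) : Prop :=
  is_proj_system le p /\ forall i j, le i j -> is_projection (p i j).

Definition coherent_wH (T : topologicalType) : Prop :=
  coherent T /\ weakly_hausdorff T.

Definition compact_coherent_wH (T : topologicalType) : Prop :=
  compact_space T /\ coherent T /\ weakly_hausdorff T.

(* Main.v *)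
Require Import Defs.
From HB Require Import structures.
From mathcomp Require Import all_boot all_order all_classical topology.
From mathcomp Require Import zify.
Set Implicit Arguments. Unset Strict Implicit. Unset Printing Implicit Defensive.
Local Open Scope classical_set_scope.

Inductive C := Bot | Aa | Bb of nat | Ss of nat.
HB.instance Definition _ := gen_eqMixin C.
HB.instance Definition _ := gen_choiceMixin C.

Definition le (n : nat) (c d : C) : Prop :=
 match c, d with
 | Bot, _ => True
 | Aa, Aa => True
 | Aa, Ss _ => True
 | Bb i, Bb j => (i <= j)%N
 | Bb i, Ss k => (i <= n)%N /\ (i <= k)%N
 | Ss k, Ss l => (k <= l)%N
 | _, _ => False end.

Lemma le_refl n c : le n c c.
Proof. by case: c => //= *; lia. Qed.
Lemma le_trans n c d e : le n c d -> le n d e -> le n c e.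
Proof. by case: c; case: d; case: e => //= *; lia. Qed.

Definition upn (n : nat) (V : set C) := forall c d, le n c d -> V c -> V d.

Definition Xt (n : nat) := C.
HB.instance Definition _ (n : nat) := Choice.on (Xt n).
Lemma upT n : upn n setT. Proof. by []. Qed.
Lemma upI n : setI_closed (upn n).
Proof. by move=> A B hA hB c d h [/(hA _ _ h) ? /(hB _ _ h) ?]. Qed.
Lemma upU n (I : Type) (f : I -> set C) : (forall i, upn n (f i)) -> upn n (\bigcup_i f i).
Proof. by move=> h c d cd [i _ fi]; exists i => //; exact: h cd fi. Qed.
HB.instance Definition _ (n : nat) := isOpenTopological.Build (Xt n) (@upT n) (@upI n) (@upU n).

Lemma openX n (V : set (Xt n)) : open V <-> upn n V.
Proof. by []. Qed.

Definition pm (m n : nat) (c : C) : C :=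
  match c with Bb j => Bb (if (j <= m)%N then j else if (j <= n)%N then m else j - (n - m)) | c => c end.
Definition em (m n : nat) (c : C) : C :=
  match c with Bb j => Bb (if (j <= m)%N then j else j + (n - m)) | c => c end.

Lemma pm_id m c : pm m m c = c.
Proof. case: c => //= j; congr Bb; case: ifP => //; rewrite subnn subn0 => ->; done. Qed.

Lemma pm_comp m n k c : (m <= n)%N -> (n <= k)%N -> pm m n (pm n k c) = pm m k c.
Proof.
move=> mn nk; case: c => //= j; congr Bb.
by repeat case: ifP; move=> *; lia.
Qed.

Lemma pm_mono m n c d : (m <= n)%N -> le n c d -> le m (pm m n c) (pm m n d).
Proof.
move=> mn; case: c; case: d => //= *; repeat case: ifP; move=> *; lia.
Qed.

Lemma em_mono m n c d : (m <= n)%N -> le m c d -> le n (em m n c) (em m n d).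
Proof.
move=> mn; case: c; case: d => //= *; repeat case: ifP; move=> *; lia.
Qed.

Lemma pm_em m n c : (m <= n)%N -> pm m n (em m n c) = c.
Proof. move=> mn; case: c => //= j; congr Bb; repeat case: ifP; move=> *; lia. Qed.

Lemma em_pm m n c : (m <= n)%N -> le n (em m n (pm m n c)) c.
Proof. move=> mn; case: c => //= j; repeat case: ifP; move=> *; lia. Qed.

Lemma up_open n (c : Xt n) : open (le n c : set (Xt n)).
Proof. by apply/openX => x y h1 h2; exact: le_trans h2 h1. Qed.

Lemma specX n (c d : Xt n) : spec_le c d <-> le n c d.
Proof.
split; first by move=> h; apply: (h (le n c)); [exact: up_open|exact: le_refl].
by move=> h U /openX oU Uc; exact: oU h Uc.
Qed.

Lemma mono_cont m n (f : Xt n -> Xt m) :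
  (forall c d, le n c d -> le m (f c) (f d)) -> continuous f.
Proof.
move=> hf; apply/continuousP => A /openX oA; apply/openX => c d cd /= Ac; exact: oA _ _ (hf _ _ cd) Ac.
Qed.

Lemma least_ex (P : nat -> Prop) : (exists n, P n) -> exists n, P n /\ forall m, P m -> (n <= m)%N.
Proof.
move=> [n Pn]; apply: contrapT => hno.
suff : forall k m, (m <= k)%N -> ~ P m by move/(_ n n (leqnn n)).
elim=> [|k IH] m hm Pm.
  apply: hno; exists m; split => // m' _; lia.
apply: hno; exists m; split => // m' Pm'; rewrite leqNgt; apply/negP => lt.
apply: (IH m') Pm'; lia.
Qed.

Lemma cover_list n (A : set C) : exists G : seq C,
  (forall g, List.In g G -> A g) /\ (forall w, A w -> exists g, List.In g G /\ le n g w).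
Proof.
have opt (c : C) : exists G : seq C, (forall g, List.In g G -> A g) /\ (A c -> List.In c G).
  have [Ac|nAc] := pselect (A c); first by exists [:: c]; split => [g [<-|[]]|_]; [|left].
  by exists [::]; split.
have [G1 [G1A G1c]] := opt Bot.
have [G2 [G2A G2c]] := opt Aa.
have [G3 [G3A G3c]] : exists G : seq C, (forall g, List.In g G -> A g) /\
   (forall j, A (Bb j) -> exists g, List.In g G /\ le n g (Bb j)).
  have [ex|nex] := pselect (exists j, A (Bb j)).
    have [j [Aj jm]] := least_ex ex.
    exists [:: Bb j]; split; first by move=> g [<-|[]].
    by move=> k Ak; exists (Bb j); split; [left|exact: jm].
  by exists [::]; split => // k Ak; exfalso; apply: nex; exists k.
have [G4 [G4A G4c]] : exists G : seq C, (forall g, List.In g G -> A g) /\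
   (forall j, A (Ss j) -> exists g, List.In g G /\ le n g (Ss j)).
  have [ex|nex] := pselect (exists j, A (Ss j)).
    have [j [Aj jm]] := least_ex ex.
    exists [:: Ss j]; split; first by move=> g [<-|[]].
    by move=> k Ak; exists (Ss j); split; [left|exact: jm].
  by exists [::]; split => // k Ak; exfalso; apply: nex; exists k.
exists (G1 ++ G2 ++ G3 ++ G4); split.
  by move=> g; rewrite !List.in_app_iff => -[|[|[]]]; [apply: G1A|apply: G2A|apply: G3A|apply: G4A].
case=> [|||j] Aw.
- by exists Bot; split => //; rewrite List.in_app_iff; left; apply: G1c.
- by exists Aa; split; [rewrite !List.in_app_iff; right; left; apply: G2c|exact: le_refl].
- move=> Aj; have [g [gin gle]] := G3c _ Aj; exists g; split => //.
  by rewrite !List.in_app_iff; right; right; left.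
- have [g [gin gle]] := G4c _ Aw; exists g; split => //.
  by rewrite !List.in_app_iff; right; right; right.
Qed.

Lemma all_compact n (A : set (Xt n)) : compact A.
Proof.
move=> F FF FA.
have [G [GA Gcov]] := cover_list n A.
apply/set0P/negP => /eqP H.
have ncl : forall g, List.In g G -> ~ cluster F g.
  move=> g gin cg; have : (A `&` cluster F) g by split => //; apply: GA.
  by rewrite H.
have : exists B, F B /\ forall g, List.In g G -> forall w, B w -> le n g w -> False.
  elim: G {GA Gcov H} ncl => [|g G IH] ncl.
    by exists setT; split => //; exact: filterT.
  have [B [FB hB]] := IH (fun g' h => ncl g' (or_intror h)).
  have := ncl g (or_introl erefl).
  rewrite /cluster /= => /existsNP [B1 /existsNP [N /not_implyP [FB1 /not_implyP [nN B1N]]]].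
  exists (B `&` B1); split; first exact: filterI.
  move=> g' [<-|g'in] w [Bw B1w] le'.
    apply: B1N; exists w; split => //.
    move: nN; rewrite nbhsE => -[O [oO Og] ON]; apply: ON; exact: (proj1 (openX _) oO) _ _ le' Og.
  exact: hB g' g'in w Bw le'.
move=> [B [FB hB]].
have [w [Bw Aw]] := filter_ex (filterI FB FA).
have [g [gin gle]] := Gcov w Aw.
exact: hB g gin w Bw gle.
Qed.

Lemma Xgood n : compact_coherent_wH (Xt n).
Proof.
split; first exact: all_compact.
split; first by move=> *; exact: all_compact.
move=> x y W oW sub; exists (le n x), (le n y); split; try exact: up_open; try exact: le_refl.
move=> w [xw yw]; apply: sub; split; rewrite /upset /=; apply/specX => //.
Qed.

Definition thread (z : nat -> C) := forall m n, (m <= n)%N -> pm m n (z n) = z m.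
Definition Lt := {z : nat -> C | thread z}.
HB.instance Definition _ := gen_eqMixin Lt.
HB.instance Definition _ := gen_choiceMixin Lt.

Definition opL (A : set Lt) := forall z, A z -> exists n, forall w : Lt, le n (sval z n) (sval w n) -> A w.

Lemma basic_mono (z w : Lt) m n : (m <= n)%N -> le n (sval z n) (sval w n) -> le m (sval z m) (sval w m).
Proof.
move=> mn h; have := pm_mono mn h; by rewrite (svalP z m n mn) (svalP w m n mn).
Qed.

Lemma opLT : opL setT. Proof. by move=> z _; exists 0%N. Qed.
Lemma opLI : setI_closed opL.
Proof.
move=> A B hA hB z [Az Bz].
have [n1 h1] := hA z Az; have [n2 h2] := hB z Bz.
exists (maxn n1 n2) => w hw; split; [apply: h1|apply: h2]; apply: basic_mono hw; lia.
Qed.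
Lemma opLU (I : Type) (f : I -> set Lt) : (forall i, opL (f i)) -> opL (\bigcup_i f i).
Proof.
move=> h z [i _ fz]; have [n hn] := h i z fz; exists n => w hw; exists i => //; exact: hn.
Qed.
HB.instance Definition _ := isOpenTopological.Build Lt opLT opLI opLU.

Lemma openL (A : set Lt) : open A <-> opL A.
Proof. by []. Qed.

Definition X (n : nat) : topologicalType := Xt n.
Definition p (m n : nat) : X n -> X m := pm m n.
Definition q (n : nat) : Lt -> X n := fun z => sval z n.
Arguments p : clear implicits.
Arguments q : clear implicits.

Lemma basic_open n (c : C) : open [set w : Lt | le n c (sval w n)].
Proof.
apply/openL => z /= hz; exists n => w hw /=; exact: le_trans hz hw.
Qed.

Lemma q_cont n : continuous (q n).
Proof.
apply/continuousP => A /openX oA; apply/openL => z /= Az; exists n => w hw.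
exact: oA _ _ hw Az.
Qed.

Lemma ep : is_ep_system (fun m n : nat => (m <= n)%N) p.
Proof.
have dir : directed_preorder (fun m n : nat => (m <= n)%N).
  split => //; [move=> *; lia|by exists 0%N|move=> i j; exists (maxn i j); split; lia].
have pc : forall m n, (m <= n)%N -> continuous (p m n).
  by move=> m n mn; apply: mono_cont => c d; exact: pm_mono.
split; first split => //.
- by move=> i x; exact: pm_id.
- by move=> i j k ij jk x; exact: pm_comp.
move=> m n mn; split; first exact: pc.
exists (em m n); split.
- by apply: mono_cont => c d; exact: em_mono.
- by move=> x; exact: pm_em.
- by move=> y; apply/specX; exact: em_pm.
Qed.

Lemma lim : is_proj_limit (fun m n : nat => (m <= n)%N) p q.
Proof.
split; first by split; [exact: q_cont|move=> i j ij z; exact: (svalP z)].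
move=> M r [rc rcomp].
have th : forall x, thread (fun n => r n x) by move=> x m n mn; exact: rcomp.
exists (fun x => exist _ (fun n => r n x) (th x)); split => //.
- apply/continuousP => A /openL oA; rewrite openE => x Ax.
  have [n hn] := oA _ Ax.
  rewrite /interior /=.
  have op : open (r n @^-1` [set c | le n (r n x) c]).
    by have /continuousP := rc n; apply; apply/openX => c d cd h; exact: le_trans h cd.
  apply: (@filterS _ _ _ (r n @^-1` [set c | le n (r n x) c])).
    by move=> x' hx'; apply: hn.
  apply: open_nbhs_nbhs; split => //; exact: le_refl.
- move=> u' _ hu' x; apply: eq_sig_hprop; first by move=> ? ? ?; exact: Prop_irrelevance.
  by apply: funext => n /=; exact: hu'.
Qed.

Definition xth : Lt := exist thread (fun _ => Aa) (fun m n _ => erefl).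
Lemma yth_ok : thread Bb.
Proof. by move=> m n mn /=; congr Bb; repeat case: ifP; move=> *; lia. Qed.
Definition yth : Lt := exist thread Bb yth_ok.
Definition sth (N : nat) : Lt := exist thread (fun _ => Ss N) (fun m n _ => erefl).

Lemma notwH : ~ weakly_hausdorff Lt.
Proof.
move=> wh.
have sub : upset xth `&` upset yth `<=` set0.
  move=> z [xz yz].
  have hz : forall n, le n Aa (sval z n) /\ le n (Bb n) (sval z n).
    move=> n; split.
      by move: xz; rewrite /upset /spec_le /= => /(_ _ (@basic_open n Aa)); apply; exact: le_refl.
    by move: yz; rewrite /upset /spec_le /= => /(_ _ (@basic_open n (Bb n))); apply; exact: le_refl.
  case: (hz 0%N) => h0 h0'; case E: (sval z 0%N) h0 h0' => [| |j|k] //= _ _.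
  have [_ ] := hz k.+1.
  have := svalP z 0%N k.+1 (leq0n _); rewrite E.
  case: (sval z k.+1) => //= l [->] ; lia.
have o0 : open (set0 : set Lt) by apply/openL => z [].
have [U [V [oU Ux oV Vy UV]]] := wh xth yth set0 o0 sub.
move: oU oV => /openL oU /openL oV.
have [n1 h1] := oU _ Ux; have [n2 h2] := oV _ Vy.
apply: (UV (sth (maxn n1 n2))); split.
  by apply: h1 => /=.
by apply: h2 => /=; lia.
Qed.

Theorem corollary5p7 :
  ~ omega_projective coherent_wH /\
  ~ omega_projective compact_coherent_wH /\
  exists (X : nat -> topologicalType) (p : forall m n : nat, X n -> X m),
    is_ep_system (fun m n : nat => (m <= n)%N) p /\
    (forall n, compact_coherent_wH (X n)) /\
    exists (L : topologicalType) (q : forall n, L -> X n),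
      is_proj_limit (fun m n : nat => (m <= n)%N) p q /\ ~ weakly_hausdorff L.
Proof.
have cc : countable_cofinal (fun m n : nat => (m <= n)%N).
  by exists setT; split; [exact: countableP|move=> i; exists i].
split.
  move=> h; apply: notwH.
  have := h nat _ X p (proj1 ep) cc (fun i => proj2 (Xgood i)) Lt q lim.
  by case.
split.
  move=> h; apply: notwH.
  have := h nat _ X p (proj1 ep) cc Xgood Lt q lim.
  by case=> _ [].
exists X, p; split; first exact: ep.
split; first exact: Xgood.
by exists Lt, q; split; [exact: lim|exact: notwH].
Qed.
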